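(* Let $f:\mathbb{R}^n\to\mathbb{R}$ be a continuously differentiable convex function. Let $H$ be a diagonal matrix with nonnegative diagonal entries such that $f(y)\le f(x)+\nabla f(x)^T(y-x)+\tfrac12\|y-x\|_H^2$ for all $x,y$, and let $D$ be diagonal with $D\succ H$. Assume additionally that $f$ is $s$-restricted strongly convex. Let $(x_k)$ be a sequence generated by the IWHT method with $D$. Then the entire sequence $(x_k)$ converges.
   Context: $\|z\|_A^2=z^TAz$. $C_s=\{x\in\mathbb{R}^n:\|x\|_0\le s\}$ for a positive integer $s$, where $\|x\|_0$ is the number of nonzero entries. $\mathcal{P}_{C_s}(z)=\operatorname{argmin}_{y\in C_s}\|y-z\|_2^2$ (set-valued). IWHT with diagonal $D\succ0$: start from $x_0\in C_s$, pick $y_{k+1}\in\mathcal{P}_{C_s}\big(D^{1/2}x_k-D^{-1/2}\nabla f(x_k)\big)$ and set $x_{k+1}=D^{-1/2}y_{k+1}$. $f$ is $s$-restricted strongly convex if there is $\sigma_s>0$ with $f(y)\ge f(x)+\nabla f(x)^T(y-x)+\frac{\sigma_s}{2}\|x-y\|_2^2$ for all $x,y$ with $\|x-y\|_0\le s$. *)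

(* Defs.v *)
From HB Require Import structures.
From mathcomp Require Import all_boot all_order all_algebra.
From mathcomp Require Import all_classical all_reals all_analysis.
Set Implicit Arguments. Unset Strict Implicit. Unset Printing Implicit Defensive.
Import Order.TTheory GRing.Theory Num.Theory.
Import numFieldNormedType.Exports.
Local Open Scope classical_set_scope.
Local Open Scope ring_scope.

Section Defs.
Variables (R : realType) (n : nat).
Implicit Types (x y z : 'rV[R]_n) (A : 'M[R]_n).

Definition dotv (u v : 'rV[R]_n) : R := (u *m v^T) 0 0.
Definition sqnorm2 x : R := dotv x x.
Definition sqnormA A x : R := (x *m A *m x^T) 0 0.

Definition posdef A : Prop := forall z : 'rV[R]_n, z != 0 -> 0 < sqnormA A z.
Definition loewner_gt A B : Prop := posdef (A - B).

Definition l0 x : nat := #|[set i : 'I_n | x 0 i != 0]|.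
Definition Cs (s : nat) : set 'rV[R]_n := [set x | (l0 x <= s)%N].
Definition projCs (s : nat) z : set 'rV[R]_n :=
  [set y | Cs s y /\ forall y', Cs s y' -> sqnorm2 (y - z) <= sqnorm2 (y' - z)].

Definition grad (f : 'rV[R]_n -> R) x : 'rV[R]_n :=
  \row_(i < n) 'D_(delta_mx 0 i) f x.

(* D^{1/2} and D^{-1/2} for a diagonal matrix D = diag_mx d with d > 0 *)
Definition sqrt_diag (d : 'rV[R]_n) : 'M[R]_n := diag_mx (\row_i Num.sqrt (d 0 i)).
Definition invsqrt_diag (d : 'rV[R]_n) : 'M[R]_n :=
  diag_mx (\row_i (Num.sqrt (d 0 i))^-1).

Definition convex_fun (f : 'rV[R]_n -> R) : Prop :=
  forall x y (t : R), 0 <= t <= 1 ->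
    f ((1 - t) *: x + t *: y) <= (1 - t) * f x + t * f y.

Definition restricted_strongly_convex (f : 'rV[R]_n -> R) (s : nat) : Prop :=
  exists sigma : R, 0 < sigma /\
    forall x y, (l0 (x - y) <= s)%N ->
      f x + dotv (grad f x) (y - x) + sigma / 2 * sqnorm2 (x - y) <= f y.

Definition IWHT_seq (f : 'rV[R]_n -> R) (s : nat) (d : 'rV[R]_n)
    (xs : nat -> 'rV[R]_n) : Prop :=
  Cs s (xs 0%N) /\
  forall k, exists y,
    projCs s (xs k *m sqrt_diag d - grad f (xs k) *m invsqrt_diag d) y /\
    xs k.+1 = y *m invsqrt_diag d.

End Defs.

(* Main.v *)
Require Import Defs.
From HB Require Import structures.
From mathcomp Require Import all_boot all_order all_algebra.
From mathcomp Require Import all_classical all_reals all_analysis.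
From mathcomp Require Import ring lra.
Import Order.TTheory GRing.Theory Num.Theory.
Import numFieldNormedType.Exports.
Local Open Scope classical_set_scope.
Local Open Scope ring_scope.
Set Implicit Arguments. Unset Strict Implicit. Unset Printing Implicit Defensive.
Section Basic.
Variables (R : realType) (n : nat).
Implicit Types (x y u v w : 'rV[R]_n).

Lemma dotvE u v : dotv u v = \sum_i u 0 i * v 0 i.
Proof. by rewrite /dotv mxE; apply: eq_bigr => i _; rewrite mxE. Qed.

Lemma sqnormAE w x : sqnormA (diag_mx w) x = \sum_i w 0 i * (x 0 i)^+2.
Proof.
rewrite /sqnormA mul_mx_diag !mxE; apply: eq_bigr => i _; rewrite !mxE.
by rewrite expr2 [_ * w 0 i]mulrC mulrA.
Qed.

Lemma sqnorm2E x : sqnorm2 x = \sum_i (x 0 i)^+2.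
Proof. by rewrite /sqnorm2 dotvE; apply: eq_bigr => i _; rewrite expr2. Qed.

Lemma mxdiagE x w i : (x *m diag_mx w) 0 i = x 0 i * w 0 i.
Proof. by rewrite mul_mx_diag mxE. Qed.

Lemma coord_le_norm v i : `|v 0 i| <= `|v|.
Proof.
rewrite [leRHS]/Num.Def.normr /= mx_normrE; apply/bigmax_geP; right => /=.
by exists (0, i).
Qed.

Lemma norm_lt v e : 0 < e -> (forall i, `|v 0 i| < e) -> `|v| < e.
Proof.
move=> e0 H; rewrite /Num.Def.normr /= mx_normrE; apply: bigmax_lt => //.
move=> [a b] _ /=; by rewrite (ord1 a).
Qed.

Lemma norm_le v e : 0 <= e -> (forall i, `|v 0 i| <= e) -> `|v| <= e.
Proof.
move=> e0 H; rewrite /Num.Def.normr /= mx_normrE; apply: bigmax_le => //.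
move=> [a b] _ /=; by rewrite (ord1 a).
Qed.

Definition supp v : {set 'I_n} := [set i | v 0 i != 0]%SET.

Lemma l0E v : l0 v = #|supp v|.
Proof. by apply: eq_card => i; rewrite inE /in_mem /mem /= /in_set asboolb. Qed.

Lemma l0_mono u v : (forall i, u 0 i != 0 -> v 0 i != 0) -> (l0 u <= l0 v)%N.
Proof.
move=> H; rewrite !l0E; apply/subset_leq_card/fintype.subsetP => i; rewrite !inE.
exact: H.
Qed.

Lemma proj_coord s z y i : projCs s z y -> y 0 i != 0 -> y 0 i = z 0 i.
Proof.
move=> [Cy opt] yi0.
set y1 : 'rV[R]_n := \row_j (if j == i then z 0 i else y 0 j).
have Cy1 : Cs s y1.
  rewrite /Cs /=; apply: leq_trans Cy; apply: l0_mono => j; rewrite mxE.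
  by case: (eqVneq j i) => [->|//] _.
have := opt _ Cy1; rewrite !sqnorm2E (bigD1 i) //= [X in _ <= X](bigD1 i) //=.
rewrite !mxE eqxx subrr expr0n /= add0r.
rewrite (eq_bigr (fun j => (y1 0 j - z 0 j) ^+ 2)); last first.
  by move=> j /negPf ji; rewrite !mxE ji.
rewrite [X in _ <= X](eq_bigr (fun j => (y1 0 j - z 0 j)^+2)); last first.
  by move=> j _; rewrite !mxE.
rewrite gerDr => h.
have : (y 0 i - z 0 i) ^+ 2 == 0 by rewrite eq_le h sqr_ge0.
by rewrite sqrf_eq0 subr_eq0 => /eqP.
Qed.

Lemma step_facts (d : 'rV[R]_n) s g x x' :
  (forall i, 0 < d 0 i) -> Cs s x ->
  (exists y, projCs s (x *m sqrt_diag d - g *m invsqrt_diag d) y /\ x' = y *m invsqrt_diag d) ->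
  [/\ (l0 x' <= s)%N,
      \sum_i (d 0 i * (x' 0 i - x 0 i)^+2 + 2 * g 0 i * (x' 0 i - x 0 i)) <= 0 &
      forall i, x' 0 i != 0 -> g 0 i = d 0 i * (x 0 i - x' 0 i)].
Proof.
move=> dpos Cx [y [py ->]].
set z := _ - _ in py.
have rpos i : 0 < Num.sqrt (d 0 i) by rewrite sqrtr_gt0.
have rsq i : Num.sqrt (d 0 i) ^+ 2 = d 0 i by rewrite sqr_sqrtr // ltW.
have rn0 i : Num.sqrt (d 0 i) != 0 by rewrite gt_eqF.
have xE i : (y *m invsqrt_diag d) 0 i = y 0 i / Num.sqrt (d 0 i).
  by rewrite /invsqrt_diag mxdiagE mxE.
have zE i : z 0 i = x 0 i * Num.sqrt (d 0 i) - g 0 i / Num.sqrt (d 0 i).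
  by rewrite /z /sqrt_diag /invsqrt_diag !mul_mx_diag !mxE.
split.
- apply: leq_trans (proj1 py); apply: l0_mono => i.
  by rewrite xE mulf_eq0 negb_or => /andP[].
- set y0 := x *m sqrt_diag d.
  have Cy0 : Cs s y0.
    rewrite /Cs /=; apply: leq_trans Cx; apply: l0_mono => i.
    by rewrite /y0 /sqrt_diag mxdiagE mulf_eq0 negb_or => /andP[].
  have := (proj2 py) _ Cy0; rewrite -subr_le0; apply: le_trans; rewrite le_eqVlt; apply/orP; left; apply/eqP.
  rewrite !sqnorm2E -sumrB; apply: eq_bigr => i _.
  have zN : (- z) 0 i = - z 0 i by rewrite mxE.
  rewrite xE [(y - z) 0 i]mxE [(y0 - z) 0 i]mxE !zN zE /y0 /sqrt_diag mxdiagE mxE.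
  move: (rsq i) (rn0 i); set r := Num.sqrt (d 0 i) => <- rn; field; exact: rn.
- move=> i; rewrite xE => xi0.
  have yi0 : y 0 i != 0 by move: xi0; rewrite mulf_eq0 negb_or => /andP[].
  rewrite (proj_coord py yi0) zE.
  move: (rsq i) (rn0 i); set r := Num.sqrt (d 0 i) => <- rn; field; exact: rn.
Qed.

End Basic.
Section Topo.
Variables (R : realType) (n : nat).

Definition clust (u : nat -> 'rV[R]_n) p :=
  forall e, 0 < e -> forall N, exists k, (N <= k)%N /\ `|u k - p| < e.

Lemma exists_clust u B : (forall k, `|u k| <= B) -> exists p, clust u p.
Proof.
move=> uB.
pose A := closed_ball_ (fun v : 'rV[R]_n => `|v|) 0 B.
have cA : compact A.
  apply: bounded_closed_compact; last exact: closed_closed_ball_.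
  rewrite /= /bounded_near; near=> M => v; rewrite /A /closed_ball_ /= sub0r normrN => Av.
  apply: le_trans Av _; near: M; exact: nbhs_pinfty_ge (num_real B).
have [p [Ap clp]] : A `&` cluster (u @ \oo) !=set0.
  apply: cA.
  by exists 0%N => // k _ /=; rewrite /A /closed_ball_ /= sub0r normrN.
exists p => e e0 N.
have [v [[k Nk <-] pb]] := clp (u @` [set k | (N <= k)%N]) (ball p e)
  (ltac:(by exists N => // k /= Nk; exists k)) (@nbhsx_ballx _ _ p e e0).
exists k; split => //; move: pb; rewrite -ball_normE /ball_ /= distrC.
Unshelve. all: by end_near.
Qed.
Lemma sep (Q : 'rV[R]_n -> Prop) p :
  (forall q1 q2, Q q1 -> Q q2 -> supp q1 = supp q2 -> q1 = q2) ->
  exists2 del, 0 < del & forall q, Q q -> q != p -> del <= `|q - p|.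
Proof.
move=> inj.
pose P (S : {set 'I_n}) q := Q q /\ supp q = S /\ q != p.
pose psi (S : {set 'I_n}) := if `[< exists q, P S q >] then `|xget 0 (P S) - p| else 1.
exists (\big[Order.min/1]_S psi S).
  apply: lt_bigmin => // S _; rewrite /psi; case: asboolP => // ex.
  have [_ [_ qp]] := xgetPex 0 ex.
  by rewrite normr_gt0 subr_eq0.
move=> q Qq qp; apply: le_trans (bigmin_le _ (supp q) _) _.
rewrite /psi; case: asboolP => [ex|]; last first.
  by case; exists q.
have [Qx [Sx _]] := xgetPex 0 ex.
by rewrite (inj _ _ Qx Qq Sx).
Qed.
End Topo.
Section Conv.
Variables (R : realType) (n : nat).

Lemma conv_abstract (x : nat -> 'rV[R]_n) B :
  (forall k, `|x k| <= B) ->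
  (forall e, 0 < e -> exists N, forall k, (N <= k)%N -> `|x k.+1 - x k| < e) ->
  (forall p q, clust x p -> clust x q -> supp p = supp q -> p = q) ->
  exists l : 'rV[R]_n, x @ \oo --> l.
Proof.
move=> xB step inj.
have [p cp] := exists_clust xB.
have [del del0 hdel] := sep p inj.
exists p; apply/cvgrPdist_lt => e e0.
pose eps := Order.min e (del / 2).
have eps0 : 0 < eps by rewrite lt_min e0 divr_gt0.
have epse : eps <= e by rewrite ge_min lexx.
have epsd : eps <= del / 2 by rewrite ge_min lexx orbT.
suff [N HN] : exists N, forall k, (N <= k)%N -> `|x k - p| < eps.
  exists N => // k /= Nk; rewrite distrC; exact: lt_le_trans (HN k Nk) epse.
apply: contrapT => H.
have far N : exists k, (N <= k)%N /\ eps <= `|x k - p|.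
  apply: contrapT => nf; apply: H; exists N => k Nk; rewrite ltNge; apply/negP => le.
  by apply: nf; exists k; split.
have [N0 hN0] := step (eps / 2) (ltac:(by rewrite divr_gt0)).
have ann N : exists k, (N <= k)%N /\ (eps / 2 <= `|x k - p| /\ `|x k - p| < eps).
  have [k1 [Nk1 hk1]] := cp (eps / 2) (ltac:(by rewrite divr_gt0)) (maxn N N0).
  have [k2 [k12 hk2]] := far k1.
  have exP : exists j, eps / 2 <= `|x (k1 + j)%N - p|.
    exists (k2 - k1)%N; rewrite subnKC //; apply: le_trans hk2.
    lra.
  case: (ex_minnP exP) => m Pm minm.
  case: m Pm minm => [|m] Pm minm.
    by move: Pm; rewrite addn0 leNgt hk1.
  have nPm : `|x (k1 + m)%N - p| < eps / 2.
    rewrite ltNge; apply/negP => h; have := minm m h; by rewrite ltnn.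
  exists (k1 + m.+1)%N; split.
    by apply: leq_trans (leq_addr _ _); apply: leq_trans Nk1; rewrite leq_maxl.
  split; first exact: Pm.
  have st : `|x (k1 + m)%N.+1 - x (k1 + m)%N| < eps / 2.
    apply: hN0; apply: leq_trans (leq_addr _ _); apply: leq_trans Nk1; by rewrite leq_maxr.
  have tr : `|x (k1 + m.+1)%N - p| <= `|x (k1 + m)%N.+1 - x (k1 + m)%N| + `|x (k1 + m)%N - p|.
    have -> : x (k1 + m.+1)%N - p = (x (k1 + m)%N.+1 - x (k1 + m)%N) + (x (k1 + m)%N - p).
      by rewrite addnS addrA subrK.
    exact: ler_normD.
  lra.
have [c hc] := choice ann.
pose u N := x (c N).
have [q cq] := exists_clust (fun N => xB (c N)) .
have cxq : clust x q.
  move=> e' e'0 N; have [j [Nj hj]] := cq e' e'0 N.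
  exists (c j); split => //; apply: leq_trans Nj (proj1 (hc j)).
have [j [_ hj]] := cq (eps / 4) (ltac:(by rewrite divr_gt0)) 0%N.
have [_ [a1 a2]] := hc j.
have t1 : `|q - p| <= `|x (c j) - p| + `|x (c j) - q|.
  have -> : q - p = (x (c j) - p) - (x (c j) - q) by rewrite opprB [RHS]addrC [RHS]addrA subrK.
  exact: ler_normB.
have t2 : `|x (c j) - p| <= `|x (c j) - q| + `|q - p|.
  have -> : x (c j) - p = (x (c j) - q) + (q - p) by rewrite addrA subrK.
  exact: ler_normD.
have qp : q != p.
  apply/negP => /eqP qp; move: hj; rewrite qp => hj; lra.
have := hdel q cxq qp; lra.
Qed.
End Conv.
Section Helpers.
Variables (R : realType) (n : nat).
Implicit Types (x y u v w : 'rV[R]_n).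

Lemma subE u v i : (u - v) 0 i = u 0 i - v 0 i.
Proof. by rewrite !mxE. Qed.

Lemma sqnorm2N u : sqnorm2 (- u) = sqnorm2 u.
Proof. by rewrite !sqnorm2E; apply: eq_bigr => i _; rewrite mxE sqrrN. Qed.

Lemma sqnormA_delta w i : sqnormA (diag_mx w) (delta_mx 0 i) = w 0 i.
Proof.
rewrite sqnormAE (bigD1 i) //= big1 => [|j ji]; first by rewrite !mxE !eqxx /= expr1n mulr1 addr0.
by rewrite !mxE (negPf ji) andbF /= expr0n /= mulr0.
Qed.

Lemma sqnormAB w1 w2 z :
  sqnormA (diag_mx w1 - diag_mx w2) z = sqnormA (diag_mx w1) z - sqnormA (diag_mx w2) z.
Proof. by rewrite /sqnormA mulmxBr mulmxBl [LHS]mxE; congr (_ + _); rewrite mxE. Qed.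

Lemma supp_nbhd (p : 'rV[R]_n) :
  exists2 e, 0 < e & forall v, `|v - p| < e -> forall i, p 0 i != 0 -> v 0 i != 0.
Proof.
exists (\big[Order.min/1]_i (if p 0 i != 0 then `|p 0 i| else 1)).
  apply: lt_bigmin => // i _; case: ifP => // pi; by rewrite normr_gt0.
move=> v hv i pi; apply/negP => /eqP vi.
have h1 := le_lt_trans (coord_le_norm (v - p) i) hv.
have h2 := bigmin_le 1 i (fun i => if p 0 i != 0 then `|p 0 i| else 1).
move: h1 h2; rewrite pi subE vi sub0r normrN => h1 h2.
by have := lt_le_trans h1 h2; rewrite ltxx.
Qed.

Lemma zero_small (a c : R) : 0 < c -> (forall eta, 0 < eta -> `|a| < c * eta) -> a = 0.
Proof.
move=> c0 H; have [//|a0] := eqVneq a 0.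
have := H (`|a| / c) (ltac:(by rewrite divr_gt0 // normr_gt0)).
by rewrite mulrC divfK ?gt_eqF // ltxx.
Qed.

Lemma term_le_sum (F : 'I_n -> R) i : (forall j, 0 <= F j) -> F i <= \sum_j F j.
Proof.
move=> F0; rewrite (bigD1 i) //= lerDl; exact: sumr_ge0.
Qed.

Lemma abs_le_sq (y : R) : `|y| <= 1 + y ^+ 2.
Proof.
rewrite -(real_normK (num_real y)).
have := normr_ge0 y; set a := `|y|; nra.
Qed.

Lemma abs_lt_of_sq (y e : R) : 0 < e -> y ^+ 2 < e ^+ 2 -> `|y| < e.
Proof.
rewrite -(real_normK (num_real y)) => e0.
have := normr_ge0 y; set a := `|y|; nra.
Qed.

End Helpers.
Theorem proposition4p7 (R : realType) (n s : nat) (f : 'rV[R]_n -> R)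
    (h d : 'rV[R]_n) (xs : nat -> 'rV[R]_n) :
  (0 < s)%N ->
  (forall x, differentiable f x) ->
  continuous (grad f) ->
  convex_fun f ->
  (forall i, 0 <= h 0 i) ->
  (forall x y, f y <= f x + dotv (grad f x) (y - x) + 2^-1 * sqnormA (diag_mx h) (y - x)) ->
  loewner_gt (diag_mx d) (diag_mx h) ->
  restricted_strongly_convex f s ->
  IWHT_seq f s d xs ->
  exists l : 'rV[R]_n, xs @ \oo --> l.
Proof.
move=> s0 dif cgrad cvx h0 desc lgt [sig [sig0 rsc]] [C0 iw].
have dh i : h 0 i < d 0 i.
  have nz : delta_mx 0 i != 0 :> 'rV[R]_n.
    apply/negP => /eqP/matrixP/(_ 0 i); rewrite !mxE !eqxx /= => /eqP.
    by rewrite oner_eq0.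
  have := lgt _ nz; rewrite sqnormAB !sqnormA_delta; lra.
have dpos i : 0 < d 0 i := le_lt_trans (h0 i) (dh i).
have Cx : forall k, Cs s (xs k).
  elim => [//|k IH]; have [a _ _] := step_facts dpos IH (iw k); exact: a.
have SF k := step_facts dpos (Cx k) (iw k).
have desck k : f (xs k.+1) + 2^-1 * \sum_i (d 0 i - h 0 i) * (xs k.+1 0 i - xs k 0 i)^+2 <= f (xs k).
  have [_ S2 _] := SF k.
  have := desc (xs k) (xs k.+1).
  rewrite dotvE sqnormAE.
  under eq_bigr do rewrite subE.
  under [X in _ + 2^-1 * X]eq_bigr do rewrite subE.
  move: S2; rewrite big_split /=.
  have -> : \sum_i 2 * grad f (xs k) 0 i * (xs k.+1 0 i - xs k 0 i) =
            2 * \sum_i grad f (xs k) 0 i * (xs k.+1 0 i - xs k 0 i).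
    by rewrite mulr_sumr; apply: eq_bigr => i _; rewrite mulrA.
  have -> : \sum_i (d 0 i - h 0 i) * (xs k.+1 0 i - xs k 0 i)^+2 =
            \sum_i d 0 i * (xs k.+1 0 i - xs k 0 i)^+2 - \sum_i h 0 i * (xs k.+1 0 i - xs k 0 i)^+2.
    by rewrite -sumrB; apply: eq_bigr => i _; rewrite mulrBl.
  lra.
set G0 := grad f 0.
have lb y : Cs s y -> f 0 + \sum_i (G0 0 i * y 0 i + sig / 2 * y 0 i ^+ 2) <= f y.
  move=> Cy.
  have l0y : (l0 (0 - y) <= s)%N.
    apply: leq_trans Cy; apply: l0_mono => i; by rewrite !mxE sub0r oppr_eq0.
  have := rsc 0 y l0y; rewrite subr0 sub0r sqnorm2N dotvE sqnorm2E.
  rewrite big_split /= -mulr_sumr; lra.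
have term (G y : R) : sig / 4 * y ^+ 2 - G ^+ 2 / sig <= G * y + sig / 2 * y ^+ 2.
  have : 0 <= sig / 4 * (y + 2 * G / sig) ^+ 2.
    by rewrite mulr_ge0 // ?sqr_ge0 // divr_ge0 // ltW.
  have -> : sig / 4 * (y + 2 * G / sig) ^+ 2 = sig / 4 * y ^+ 2 + G * y + G ^+ 2 / sig.
    by field; rewrite gt_eqF.
  lra.
pose K := \sum_i G0 0 i ^+ 2 / sig.
have lb2 y : Cs s y -> f 0 - K + sig / 4 * \sum_i y 0 i ^+ 2 <= f y.
  move=> Cy; apply: le_trans (lb y Cy).
  have hs : \sum_i (sig / 4 * y 0 i ^+ 2 - G0 0 i ^+ 2 / sig) <=
            \sum_i (G0 0 i * y 0 i + sig / 2 * y 0 i ^+ 2).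
    by apply: ler_sum => i _; exact: term.
  move: hs; rewrite sumrB -mulr_sumr /K; lra.
have fdec k : f (xs k) <= f (xs 0).
  elim: k => [//|k IH]; apply: le_trans IH; apply: le_trans (desck k).
  rewrite lerDl mulr_ge0 // ?invr_ge0 ?ler0n //; apply: sumr_ge0 => i _.
  by rewrite mulr_ge0 ?sqr_ge0 // subr_ge0 ltW.
have sq0 (y : 'rV[R]_n) : 0 <= \sum_i y 0 i ^+ 2 :> R by apply: sumr_ge0 => i _; exact: sqr_ge0.
have Fb k : f 0 - K <= f (xs k).
  have := lb2 _ (Cx k); have := sq0 (xs k); have : 0 <= sig / 4 by rewrite divr_ge0 // ltW.
  nra.
pose M := 4 / sig * (f (xs 0) - f 0 + K).
have xB k : `|xs k| <= 1 + `|M|.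
  apply: norm_le => [|i]; first by rewrite addr_ge0.
  apply: le_trans (abs_le_sq _) _; rewrite lerD2l.
  apply: le_trans (ler_norm M).
  have h1 := term_le_sum i (fun j => sqr_ge0 (xs k 0 j)).
  have h2 := lb2 _ (Cx k); have h3 := fdec k.
  have : sig / 4 * \sum_i xs k 0 i ^+ 2 <= f (xs 0) - f 0 + K by lra.
  rewrite /M -ler_pdivlMl ?divr_gt0 // invf_div => h4; exact: le_trans h1 h4.
pose mu := \big[Order.min/1]_i (d 0 i - h 0 i).
have mu0 : 0 < mu by apply: lt_bigmin => // i _; rewrite subr_gt0.
have mule i : mu <= d 0 i - h 0 i := bigmin_le 1 i (fun i => d 0 i - h 0 i).
have tnn k j : 0 <= (d 0 j - h 0 j) * (xs k.+1 0 j - xs k 0 j) ^+ 2.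
  by rewrite mulr_ge0 ?sqr_ge0 // subr_ge0 ltW.
pose F k := f (xs k).
have Fnon : {homo F : a b / (a <= b)%N >-> b <= a}.
  apply/nonincreasing_seqP => k; apply: le_trans (desck k).
  rewrite lerDl mulr_ge0 // ?invr_ge0 ?ler0n //; apply: sumr_ge0 => i _; exact: tnn.
have Fcv : cvgn F.
  apply: nonincreasing_is_cvgn Fnon _.
  by exists (f 0 - K) => _ [k _ <-]; exact: Fb.
have stepz e : 0 < e -> exists N, forall k, (N <= k)%N -> `|xs k.+1 - xs k| < e.
  move=> e0; pose eta := mu * e ^+ 2 / 4.
  have eta0 : 0 < eta by rewrite divr_gt0 // mulr_gt0 // exprn_gt0.
  move/cvgrPdist_lt: Fcv => /(_ eta eta0) [N _ HN].
  exists N => k Nk; have a1 := HN k Nk; have a2 := HN k.+1 (leqW Nk).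
  move: a1 a2; rewrite /F !ltr_norml => /andP[a1 b1] /andP[a2 b2].
  apply: norm_lt => // i; rewrite subE; apply: abs_lt_of_sq => //.
  have t := term_le_sum i (tnn k).
  have dk := desck k.
  have m1 : mu * (xs k.+1 0 i - xs k 0 i) ^+ 2 <= (d 0 i - h 0 i) * (xs k.+1 0 i - xs k 0 i) ^+ 2.
    by rewrite ler_wpM2r ?sqr_ge0.
  have : mu * (xs k.+1 0 i - xs k 0 i) ^+ 2 < mu * e ^+ 2.
    rewrite /eta in a1 a2 b1 b2; lra.
  by rewrite ltr_pM2l.
have clprop p : clust xs p ->
    (l0 p <= s)%N /\ forall i, p 0 i != 0 -> grad f p 0 i = 0.
  move=> cp; have [es es0 hes] := supp_nbhd p.
  split.
    have [k [_ hk]] := cp es es0 0%N.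
    apply: leq_trans (Cx k); apply: l0_mono => i; exact: hes _ hk i.
  move=> i pi; apply: (@zero_small _ _ (1 + d 0 i)) => [|eta eta0].
    by rewrite addr_gt0.
  have := cgrad p; move/cvgrPdist_lt => /(_ eta eta0) /nbhs_ballP [del del0 hdel].
  pose e1 := Order.min eta (es / 2).
  have e10 : 0 < e1 by rewrite lt_min eta0 divr_gt0.
  have e1a : e1 <= eta by rewrite ge_min lexx.
  have e1b : e1 <= es / 2 by rewrite ge_min lexx orbT.
  have [N hN] := stepz e1 e10.
  pose e2 := Order.min del (es / 2).
  have e20 : 0 < e2 by rewrite lt_min del0 divr_gt0.
  have e2a : e2 <= del by rewrite ge_min lexx.
  have e2b : e2 <= es / 2 by rewrite ge_min lexx orbT.
  have [k [Nk hk]] := cp e2 e20 N.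
  have sk := hN k Nk.
  have g1 : `|grad f p - grad f (xs k)| < eta.
    apply: hdel; rewrite -ball_normE /ball_ /= distrC; exact: lt_le_trans hk e2a.
  have xk1 : `|xs k.+1 - p| < es.
    have t : `|xs k.+1 - p| <= `|xs k.+1 - xs k| + `|xs k - p|.
      have -> : xs k.+1 - p = (xs k.+1 - xs k) + (xs k - p) by rewrite addrA subrK.
      exact: ler_normD.
    lra.
  have nz := hes _ xk1 i pi.
  have [_ _ S3] := SF k.
  have ge := S3 i nz.
  have c1 : `|grad f p 0 i - grad f (xs k) 0 i| < eta.
    by rewrite -subE; exact: le_lt_trans (coord_le_norm _ i) g1.
  have c2 : `|grad f (xs k) 0 i| <= d 0 i * `|xs k.+1 - xs k|.
    rewrite ge normrM (gtr0_norm (dpos i)) ler_wpM2l ?(ltW (dpos i)) //.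
    by rewrite distrC -subE; exact: coord_le_norm.
  have c3 : d 0 i * `|xs k.+1 - xs k| <= d 0 i * eta.
    rewrite ler_wpM2l ?(ltW (dpos i)) //; apply: le_trans (ltW sk) e1a.
  have c4 : `|grad f p 0 i| <= `|grad f p 0 i - grad f (xs k) 0 i| + `|grad f (xs k) 0 i|.
    by have := ler_normD (grad f p 0 i - grad f (xs k) 0 i) (grad f (xs k) 0 i); rewrite subrK.
  rewrite mulrDl mul1r; lra.
have inj p q : clust xs p -> clust xs q -> supp p = supp q -> p = q.
  move=> cp cq E.
  have [lp gp] := clprop p cp; have [lq gq] := clprop q cq.
  have Ei j : (p 0 j != 0) = (q 0 j != 0).
    by have := E; move/finset.setP/(_ j); rewrite /supp !inE.
  have zpq j : p 0 j = 0 -> q 0 j = 0.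
    by move=> pj; apply/eqP; rewrite -[q 0 j == 0]negbK -Ei pj eqxx.
  have zqp j : q 0 j = 0 -> p 0 j = 0.
    by move=> qj; apply/eqP; rewrite -[p 0 j == 0]negbK Ei qj eqxx.
  have lpq : (l0 (p - q) <= s)%N.
    apply: leq_trans lp; apply: l0_mono => j; rewrite subE.
    by apply: contra_neq => pj; rewrite pj (zpq j pj) subrr.
  have lqp : (l0 (q - p) <= s)%N.
    apply: leq_trans lq; apply: l0_mono => j; rewrite subE.
    by apply: contra_neq => qj; rewrite qj (zqp j qj) subrr.
  have dpq : dotv (grad f p) (q - p) = 0.
    rewrite dotvE big1 // => j _; rewrite subE.
    have [pj|pj] := eqVneq (p 0 j) 0; first by rewrite pj (zpq j pj) subrr mulr0.
    by rewrite (gp j pj) mul0r.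
  have dqp : dotv (grad f q) (p - q) = 0.
    rewrite dotvE big1 // => j _; rewrite subE.
    have [qj|qj] := eqVneq (q 0 j) 0; first by rewrite qj (zqp j qj) subrr mulr0.
    by rewrite (gq j qj) mul0r.
  have r1 := rsc p q lpq; have r2 := rsc q p lqp.
  rewrite dpq in r1; rewrite dqp in r2.
  have sn : sqnorm2 (q - p) = sqnorm2 (p - q) by rewrite -opprB sqnorm2N.
  rewrite sn in r2.
  have nn : 0 <= sqnorm2 (p - q) by rewrite sqnorm2E; exact: sq0.
  have : sig * sqnorm2 (p - q) <= 0 by lra.
  rewrite pmulr_rle0 // => sle.
  have s00 : sqnorm2 (p - q) = 0 by apply/eqP; rewrite eq_le sle nn.
  move: s00; rewrite sqnorm2E => s00.
  have H := psumr_eq0P (fun i _ => sqr_ge0 ((p - q) 0 i)) s00.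
  apply/matrixP => a b; rewrite (ord1 a).
  have := H b isT; rewrite subE => /eqP; rewrite sqrf_eq0 subr_eq0 => /eqP.
  done.
exact: conv_abstract xB stepz inj.
Qed.
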